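(* Let $G$ be an unweighted graph (loops allowed, no parallel edges) with no isolated vertices, with adjacency matrix $A_G$ (diagonal entry $1$ at looped vertices), and let $Q_G(\mathbf{x})=\tfrac12\mathbf{x}^TA_G\mathbf{x}$. The following are equivalent: (1) $G$ is antiferromagnetic; (2) $Q_G$ is Lorentzian; (3) $\operatorname{supp}(Q_G)$ is M-convex; (4) there exist disjoint vertex sets $V_1,V_2$ with $V_1\cup V_2=V(G)$ such that $V_1$ induces a complete multipartite graph (with no loops) and $V_2$ consists of looped vertices each adjacent to all vertices of $G$.
   Context: A symmetric nonnegative matrix (or the corresponding graph) is antiferromagnetic if it has at most one positive eigenvalue, counted with multiplicity. The support $\operatorname{supp}(f)\subseteq\mathbb{N}_0^n$ of a polynomial $f$ is the set of exponent vectors of monomials with nonzero coefficient. A set $S\subseteq\mathbb{N}_0^n$ is M-convex if for all $\mathbf{a},\mathbf{b}\in S$ and every $i$ with $a_i>b_i$ there is $j$ with $a_j<b_j$ and $\mathbf{a}-\mathbf{e}_i+\mathbf{e}_j\in S$. A homogeneous polynomial $f$ with nonnegative coefficients of degree $d\ge2$ is Lorentzian if: for $d=2$, its Hessian $(\partial_i\partial_jf)_{i,j}$ has at most one positive eigenvalue; for $d>2$, every $\partial_if$ is Lorentzian and $\operatorname{supp}(f)$ is M-convex. *)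

(* Defs.v *)
From HB Require Import structures.
From mathcomp Require Import all_boot all_order all_algebra.
From mathcomp Require Import reals.
From mathcomp Require Import mpoly.

Set Implicit Arguments.
Unset Strict Implicit.
Unset Printing Implicit Defensive.

Import Order.TTheory GRing.Theory Num.Theory.
Local Open Scope ring_scope.

Section Defs.
Variable R : realType.

(* Number of positive eigenvalues of a square matrix, counted with
   multiplicity, is at most one: for every finite list of distinct positive
   reals, the sum of their multiplicities as roots of the characteristic
   polynomial is <= 1. *)
Definition at_most_one_pos_eig (m : nat) (M : 'M[R]_m) : Prop :=
  forall s : seq R, uniq s -> all (fun x => 0 < x) s ->
    (\sum_(x <- s) mup x (char_poly M) <= 1)%N.

(* Graph on vertex set 'I_n : symmetric relation, loops allowed. *)
Definition adjmx (n : nat) (e : rel 'I_n) : 'M[R]_n :=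
  \matrix_(i, j) (if e i j then 1 else 0).

Definition antiferromagnetic (n : nat) (e : rel 'I_n) : Prop :=
  at_most_one_pos_eig (adjmx e).

Definition QG (n : nat) (e : rel 'I_n) : {mpoly R[n]} :=
  \sum_(i < n) \sum_(j < n) ((adjmx e i j / 2%:R) *: ('X_i * 'X_j)).

Definition supp (n : nat) (f : {mpoly R[n]}) : pred 'X_{1..n} :=
  fun m => f@_m != 0.

Definition Mconvex (n : nat) (S : pred 'X_{1..n}) : Prop :=
  forall a b, S a -> S b -> forall i : 'I_n, (b i < a i)%N ->
    exists j : 'I_n, (a j < b j)%N /\ S (a - U_(i) + U_(j))%MM.

Definition nonneg_coeffs (n : nat) (f : {mpoly R[n]}) : Prop :=
  forall m, 0 <= f@_m.

(* Hessian of a quadratic form: its second partial derivatives are constants;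
   we take their constant coefficients. *)
Definition hessian (n : nat) (f : {mpoly R[n]}) : 'M[R]_n :=
  \matrix_(i, j) (mderiv i (mderiv j f))@_0%MM.

Fixpoint lorentzian (n : nat) (d : nat) (f : {mpoly R[n]}) {struct d} : Prop :=
  [/\ nonneg_coeffs f, f \is d.-homog &
    match d with
    | 0 => False
    | d'.+1 =>
        if d' == 0%N then False
        else if d' == 1%N then at_most_one_pos_eig (hessian f)
        else (forall i : 'I_n, lorentzian d' (mderiv i f)) /\ Mconvex (supp f)
    end].

(* V induces a complete multipartite graph without loops: vertices of V are
   labelled by parts, and two vertices of V are adjacent iff they lie in
   different parts. *)
Definition complete_multipartite_on (n : nat) (e : rel 'I_n) (V : {set 'I_n}) : Prop :=
  exists part : 'I_n -> nat, forall x y, x \in V -> y \in V -> e x y = (part x != part y).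

End Defs.

(* Main.v *)
Require Import Defs.
From HB Require Import structures.
From mathcomp Require Import all_boot all_order all_algebra.
From mathcomp Require Import reals.
From mathcomp Require Import mpoly.
From mathcomp Require Import complex.
From mathcomp Require Import ring lra.
Set Implicit Arguments.
Unset Strict Implicit.
Unset Printing Implicit Defensive.
Import Order.TTheory GRing.Theory Num.Theory.
Local Open Scope ring_scope.
Local Open Scope sesquilinear_scope.

Lemma char_poly_conj (F : fieldType) n (P D : 'M[F]_n) :
  P \in unitmx -> char_poly (invmx P *m D *m P) = char_poly D.
Proof.
move=> Pu.
rewrite /char_poly /char_poly_mx.
set P' := map_mx polyC P.
have P'u : P' \in unitmx by rewrite map_unitmx.
have -> : map_mx polyC (invmx P *m D *m P) = invmx P' *m map_mx polyC D *m P'.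
  by rewrite !map_mxM map_invmx.
have E : ('X%:M : 'M_n) - invmx P' *m map_mx polyC D *m P' =
    invmx P' *m ('X%:M - map_mx polyC D) *m P'.
  rewrite mulmxBr mulmxBl; congr (_ - _).
  by rewrite mul_mx_scalar -scalemxAl mulVmx // scalemx1.
rewrite E !det_mulmx mulrC mulrA -det_mulmx mulmxV //.
by rewrite det1 mul1r.
Qed.

Section MupMap.
Variables (F : fieldType) (K : fieldType) (f : {rmorphism F -> K}).
Lemma mup_map (q : {poly F}) x : q != 0 ->
  mup (f x) (map_poly f q) = mup x q.
Proof.
move=> q0.
have q0' : map_poly f q != 0 by rewrite map_poly_eq0.
apply/eqP; rewrite eqn_leq; apply/andP; split.
  rewrite mup_geq //.
  have : ('X - (f x)%:P) ^+ mup (f x) (map_poly f q) %| map_poly f q.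
    by rewrite -mup_geq.
  by rewrite -map_polyXsubC -rmorphXn dvdp_map.
rewrite mup_geq // -map_polyXsubC -rmorphXn dvdp_map -mup_geq //.
Qed.
End MupMap.

Definition Bf (R : pzRingType) n (A : 'M[R]_n) (g h : 'I_n -> R) : R :=
  \sum_i \sum_j g i * A i j * h j.

Section Spectral.
Variables (R : realType) (C : numClosedFieldType) (f : {rmorphism R -> C}).
Hypothesis f_real : forall x, f x \is Num.real.
Hypothesis f_pos : forall x, (0 < f x) = (0 < x).
Hypothesis f_surj : forall z, z \is Num.real -> exists x, z = f x.
Variables (n : nat) (A : 'M[R]_n).
Hypothesis Asym : A^T = A.

Let AC := map_mx f A.

Lemma AC_herm : AC \is hermsymmx.
Proof.
apply: realsym_hermsym.
  apply/is_hermitianmxP; rewrite expr0 scale1r.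
  rewrite /AC; apply/matrixP=> i j; rewrite !mxE.
  by rewrite -[in LHS]Asym mxE.
by apply/mxOverP => i j; rewrite mxE f_real.
Qed.

Let P := spectralmx AC.
Let d := spectral_diag AC.

Lemma P_unitary : P \is unitarymx.
Proof. exact: spectral_unitarymx. Qed.

Lemma AC_eq : AC = P^t* *m diag_mx d *m P.
Proof.
have := hermitian_normalmx AC_herm => /orthomx_spectralP.
by rewrite invmx_unitary // P_unitary.
Qed.

Lemma d_real i : d 0 i \is Num.real.
Proof. by have /mxOverP := hermitian_spectral_diag_real AC_herm; apply. Qed.

Lemma char_AC : char_poly AC = \prod_(i < n) ('X - (d 0 i)%:P).
Proof.
have := hermitian_normalmx AC_herm => /orthomx_spectralP E.
rewrite [in LHS]E char_poly_conj; last exact: spectral_unit.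
by rewrite char_poly_trig ?diag_mx_is_trig //; apply: eq_bigr => i _; rewrite mxE eqxx mulr1n.
Qed.

Lemma mup_char x : mup x (char_poly A) = (\sum_(i < n) (d 0%R i == f x))%N.
Proof.
rewrite -(mup_map f); last exact: monic_neq0 (char_poly_monic A).
rewrite map_char_poly -/AC char_AC.
rewrite -(big_map (fun i => d 0 i) xpredT (fun y => 'X - y%:P)).
rewrite mu_prod_XsubC count_map.
rewrite -sum1_count big_mkcond /=.
by apply: eq_bigr => i _; rewrite eq_sym; case: (_ == _).
Qed.

Definition Hf (w : 'rV[C]_n) : C := \sum_i \sum_j w 0 i * AC i j * (w 0 j)^*.

Lemma HfE w : Hf w = \sum_i d 0 i * ((w *m P^t*) 0 i * ((w *m P^t*) 0 i)^*).
Proof.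
have -> : Hf w = (w *m AC *m w^t*) 0 0.
  rewrite mxE /Hf exchange_big; apply: eq_bigr => j _; rewrite !mxE mulr_suml.
  by apply: eq_bigr => i _; rewrite !mxE.
rewrite AC_eq.
have -> : w *m (P^t* *m diag_mx d *m P) *m w^t* =
          (w *m P^t*) *m diag_mx d *m (w *m P^t*)^t*.
  by rewrite trmx_mul map_mxM trmxCK !mulmxA.
rewrite mxE; apply: eq_bigr => i _; rewrite mul_mx_diag !mxE.
by rewrite mulrCA mulrA.
Qed.

Lemma KLa : (forall k l, 0 < d 0 k -> 0 < d 0 l -> k = l) ->
  forall u v : 'rV[C]_n, exists a b : C,
    ((a != 0) || (b != 0)) /\ ~~ (0 < Hf (a *: u + b *: v)).
Proof.
move=> uniqpos u v.
set yu := u *m P^t*; set yv := v *m P^t*.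
have yE a b : (a *: u + b *: v) *m P^t* = a *: yu + b *: yv.
  by rewrite mulmxDl -!scalemxAl.
clearbody yu yv.
suff [a [b [ab H]]] : exists a b : C, ((a != 0) || (b != 0)) /\
    (forall i, 0 < d 0 i -> (a *: yu + b *: yv) 0 i = 0).
  exists a, b; split => //.
  have S0 : Hf (a *: u + b *: v) <= 0.
    rewrite HfE yE; apply: sumr_le0 => i _.
    case: (boolP (0 < d 0 i)) => [dpos|dnpos]; first by rewrite H // mul0r mulr0.
    have dle : d 0 i <= 0 by rewrite real_leNgt ?d_real ?real0.
    by apply: mulr_le0_ge0 => //; exact: mul_conjC_ge0.
  by rewrite le_gtF.
case: (pickP (fun i => 0 < d 0 i)) => [k dk | none]; last first.
  by exists 1, 0; split; [rewrite oner_eq0 | move=> i; rewrite none].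
case E: ((yv 0 k == 0) && (yu 0 k == 0)).
  move/andP: E => [/eqP v0 /eqP u0].
  exists 1, 0; split; first by rewrite oner_eq0.
  move=> i di; rewrite (uniqpos i k di dk) !mxE u0; by rewrite mulr0 mul0r addr0.
exists (yv 0 k), (- yu 0 k); split.
  by move: E; rewrite oppr_eq0; case: (yv 0 k == 0); case: (yu 0 k == 0).
move=> i di; rewrite (uniqpos i k di dk) !mxE.
by rewrite mulNr mulrC addrN.
Qed.

Lemma KLb k l : k != l -> 0 < d 0 k -> 0 < d 0 l ->
  exists u v : 'rV[C]_n, forall a b : C,
    (a != 0) || (b != 0) -> 0 < Hf (a *: u + b *: v).
Proof.
move=> kl dk dl; exists (row k P), (row l P) => a b ab.
have yr j : row j P *m P^t* = row j 1%:M.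
  by rewrite -row_mul (unitarymxP P_unitary).
rewrite HfE mulmxDl -!scalemxAl !yr.
rewrite (bigD1 k) //= (bigD1 l) 1?eq_sym //= big1 ?addr0; last first.
  move=> i /andP[ik il]; rewrite !mxE [k == i]eq_sym [l == i]eq_sym.
  by rewrite (negbTE ik) (negbTE il) /= !mulr0n !mulr0 addr0 mul0r mulr0.
rewrite !mxE !eqxx (negbTE kl) [l == k]eq_sym (negbTE kl) /= !mulr0n !mulr1n !mulr0 !mulr1 addr0 add0r.
have h1 : 0 <= d 0 k * (a * a^*) by apply: mulr_ge0; [exact: ltW | exact: mul_conjC_ge0].
have h2 : 0 <= d 0 l * (b * b^*) by apply: mulr_ge0; [exact: ltW | exact: mul_conjC_ge0].
case/orP: ab => [a0|b0].
  have : 0 < d 0 k * (a * a^*) by apply: mulr_gt0; rewrite ?mul_conjC_gt0.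
  by move=> h; apply: (lt_le_trans h); rewrite lerDl.
have : 0 < d 0 l * (b * b^*) by apply: mulr_gt0; rewrite ?mul_conjC_gt0.
by move=> h; apply: (lt_le_trans h); rewrite lerDr.
Qed.

Lemma sum_count (T : Type) (s : seq T) (p : pred T) :
  (\sum_(x <- s) (p x : nat))%N = count p s.
Proof. by elim: s => [|x s IH]; rewrite ?big_nil ?big_cons ?IH. Qed.

Lemma count_le1 (T : eqType) (s : seq T) (p : pred T) :
  uniq s -> (forall x y, p x -> p y -> x = y) -> (count p s <= 1)%N.
Proof.
elim: s => [|x s IH] //= /andP[xs us] pu.
case px: (p x) => /=; last by rewrite add0n IH.
suff -> : count p s = 0%N by [].
apply/eqP; rewrite -leqn0 leqNgt -has_count; apply/hasP => -[y ys py].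
by move: xs; rewrite (pu y x py px) in ys; rewrite ys.
Qed.

Lemma AF_uniq : at_most_one_pos_eig A ->
  forall k l, 0 < d 0 k -> 0 < d 0 l -> k = l.
Proof.
move=> AF k l dk dl; apply/eqP; apply/negPn/negP => kl.
have [xk ek] := f_surj (d_real k); have [xl el] := f_surj (d_real l).
have xk0 : 0 < xk by rewrite -f_pos -ek.
have xl0 : 0 < xl by rewrite -f_pos -el.
have ge1 j x : d 0 j = f x -> (1 <= mup x (char_poly A))%N.
  move=> ej; rewrite mup_char (bigD1 j) //= ej eqxx. by [].
case: (eqVneq xk xl) => [exl | nxl].
  have := AF [:: xk] isT; rewrite /= xk0 => /(_ isT); rewrite big_seq1 mup_char.
  rewrite (bigD1 k) //= (bigD1 l) 1?eq_sym //= ek exl -el eqxx.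
  by [].
have := AF [:: xk; xl]; rewrite /= inE nxl xk0 xl0 => /(_ isT isT).
rewrite !big_cons big_nil addn0.
have := ge1 k xk ek; have := ge1 l xl el.
case: (mup xk _) => [|[|?]] //; case: (mup xl _) => [|[|?]] //.
Qed.

Lemma uniq_AF : (forall k l, 0 < d 0 k -> 0 < d 0 l -> k = l) ->
  at_most_one_pos_eig A.
Proof.
move=> up s us spos.
under eq_bigr do rewrite mup_char.
rewrite exchange_big /=.
apply: (@leq_trans (\sum_(i < n) ((0 < d 0%R i)%R : nat))%N).
  apply: leq_sum => i _; rewrite sum_count.
  case: (boolP (0 < d 0 i)) => di.
    apply: count_le1 => // x y /eqP -> /eqP; exact: fmorph_inj.
  rewrite leqn0 -leqn0 leqNgt -has_count; apply/hasP => -[x xs /eqP dx].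
  by move: di; rewrite dx f_pos; move/allP: spos => /(_ x xs) ->.
case: (pickP (fun i => 0 < d 0 i)) => [k dk | none].
  rewrite (bigD1 k) //= dk big1 // => i ik.
  by case di: (0 < d 0 i) => //; rewrite (up i k di dk) eqxx in ik.
by rewrite big1 // => i _; rewrite none.
Qed.

Lemma conj_f x : (f x)^* = f x.
Proof. exact: conj_Creal (f_real x). Qed.

Definition rv (g : 'I_n -> R) : 'rV[C]_n := \row_i f (g i).

Lemma Bf_sym g h : Bf A g h = Bf A h g.
Proof.
rewrite /Bf exchange_big; apply: eq_bigr => i _; apply: eq_bigr => j _.
have Aji : A j i = A i j by rewrite -[in LHS]Asym mxE.
by rewrite Aji; ring.
Qed.

Lemma Hf_comb g h a b : Hf (a *: rv g + b *: rv h) =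
  a * a^* * f (Bf A g g) + (a * b^* + b * a^*) * f (Bf A g h) + b * b^* * f (Bf A h h).
Proof.
transitivity (a * a^* * f (Bf A g g) + a * b^* * f (Bf A g h) +
   b * a^* * f (Bf A h g) + b * b^* * f (Bf A h h)); last first.
  by rewrite (Bf_sym h g); ring.
rewrite /Hf /Bf !rmorph_sum !mulr_sumr -!big_split; apply: eq_bigr => i _.
rewrite !rmorph_sum !mulr_sumr -!big_split; apply: eq_bigr => j _.
rewrite !mxE rmorphD !rmorphM /= !conj_f ?rmorphM.
ring.
Qed.

Lemma PD_pos (a0 b0 c0 : R) (al be : C) : 0 < a0 -> b0 ^+ 2 < a0 * c0 ->
  (al != 0) || (be != 0) ->
  0 < al * al^* * f a0 + (al * be^* + be * al^*) * f b0 + be * be^* * f c0.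
Proof.
move=> a0p disc ab.
set E := (X in 0 < X).
have key : f a0 * E = (f a0 * al + f b0 * be) * (f a0 * al + f b0 * be)^* +
    f (a0 * c0 - b0 ^+ 2) * (be * be^*).
  by rewrite rmorphD !rmorphM /= !conj_f rmorphB rmorphM rmorphXn /E; ring.
have fa0 : 0 < f a0 by rewrite f_pos.
rewrite -(pmulr_rgt0 _ fa0) key.
case: (eqVneq be 0) => [be0 | be0].
  rewrite be0 mul0r !mulr0 !addr0 mul_conjC_gt0 mulf_neq0 //; first by rewrite gt_eqF.
  by move: ab; rewrite be0 eqxx orbF.
have h2 : 0 < f (a0 * c0 - b0 ^+ 2) * (be * be^*).
  by apply: mulr_gt0; rewrite ?f_pos ?subr_gt0 ?mul_conjC_gt0.
by apply: (lt_le_trans h2); rewrite lerDr mul_conjC_ge0.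
Qed.

Lemma NoPD : at_most_one_pos_eig A -> forall g h,
  0 < Bf A g g -> Bf A g h ^+ 2 < Bf A g g * Bf A h h -> False.
Proof.
move=> AF g h H1 H2.
have [a [b [ab H]]] := KLa (AF_uniq AF) (rv g) (rv h).
by move: H; rewrite Hf_comb PD_pos.
Qed.

Lemma AF_of_form : (forall w : 'rV[C]_n, \sum_i w 0 i = 0 -> Hf w <= 0) ->
  at_most_one_pos_eig A.
Proof.
move=> H; apply: uniq_AF => k l dk dl; apply/eqP/negPn/negP => kl.
have [u [v Hp]] := KLb kl dk dl.
set lu := \sum_i u 0 i; set lv := \sum_i v 0 i.
have lin a b : \sum_i (a *: u + b *: v) 0 i = a * lu + b * lv.
  by rewrite /lu /lv !mulr_sumr -big_split; apply: eq_bigr => i _; rewrite !mxE.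
case E: ((lv == 0) && (lu == 0)).
  move/andP: E => [/eqP lv0 /eqP lu0].
  have h1 := Hp 1 0; rewrite oner_eq0 /= in h1; have {}h1 := h1 isT.
  have h2 := H (1 *: u + 0 *: v); rewrite lin lu0 lv0 !mulr0 addr0 in h2; have {}h2 := h2 erefl.
  by rewrite (le_gtF h2) in h1.
have h1 := Hp lv (- lu); rewrite oppr_eq0 in h1.
have {}h1 : 0 < Hf (lv *: u + - lu *: v).
  by apply: h1; move: E; case: (lv == 0); case: (lu == 0).
have h2 := H (lv *: u + - lu *: v); rewrite lin mulNr mulrC addrN in h2; have {}h2 := h2 erefl.
by rewrite (le_gtF h2) in h1.
Qed.


End Spectral.

Definition dl (R : pzRingType) n (x : 'I_n) : 'I_n -> R := fun i => (i == x)%:R.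
Definition vadd (R : pzRingType) n (g h : 'I_n -> R) : 'I_n -> R := fun i => g i + h i.
Definition vsc (R : pzRingType) n (c : R) (g : 'I_n -> R) : 'I_n -> R := fun i => c * g i.

Section BfLemmas.
Variables (R : comNzRingType) (n : nat) (A : 'M[R]_n).
Lemma Bf_dl x y : Bf A (dl R x) (dl R y) = A x y.
Proof.
rewrite /Bf (bigD1 x) //= [X in _ + X]big1 ?addr0; last first.
  by move=> i ix; apply: big1 => j _; rewrite /dl (negbTE ix) !mul0r.
rewrite (bigD1 y) //= big1 ?addr0; last first.
  by move=> j jy; rewrite /dl (negbTE jy) mulr0.
by rewrite /dl !eqxx mul1r mulr1.
Qed.
Lemma Bf_addl g1 g2 h : Bf A (vadd g1 g2) h = Bf A g1 h + Bf A g2 h.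
Proof.
rewrite /Bf -big_split; apply: eq_bigr => i _; rewrite -big_split.
by apply: eq_bigr => j _; rewrite /vadd !mulrDl.
Qed.
Lemma Bf_addr g h1 h2 : Bf A g (vadd h1 h2) = Bf A g h1 + Bf A g h2.
Proof.
rewrite /Bf -big_split; apply: eq_bigr => i _; rewrite -big_split.
by apply: eq_bigr => j _; rewrite /vadd mulrDr.
Qed.
Lemma Bf_scl c g h : Bf A (vsc c g) h = c * Bf A g h.
Proof.
rewrite /Bf mulr_sumr; apply: eq_bigr => i _; rewrite mulr_sumr.
by apply: eq_bigr => j _; rewrite /vsc; ring.
Qed.
Lemma Bf_scr c g h : Bf A g (vsc c h) = c * Bf A g h.
Proof.
rewrite /Bf mulr_sumr; apply: eq_bigr => i _; rewrite mulr_sumr.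
by apply: eq_bigr => j _; rewrite /vsc; ring.
Qed.
End BfLemmas.

Lemma equiv_sum_ge0 (C : numClosedFieldType) n (S : {set 'I_n})
    (p : 'I_n -> nat) (w : 'I_n -> C) :
  0 <= \sum_i \sum_j ((i \in S) && (j \in S) && (p i == p j))%:R * (w i * (w j)^*).
Proof.
set N := (\max_(i < n) p i).+1.
have pN i : (p i < N)%N by rewrite ltnS; apply: (leq_bigmax i).
pose z (c : 'I_N) := \sum_i ((i \in S) && (p i == c))%:R * w i.
have -> : \sum_i \sum_j ((i \in S) && (j \in S) && (p i == p j))%:R * (w i * (w j)^*)
    = \sum_(c < N) z c * (z c)^*.
  have zz c : z c * (z c)^* = \sum_i \sum_j ((i \in S) && (p i == c))%:R *
       ((j \in S) && (p j == c))%:R * (w i * (w j)^*).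
    rewrite /z rmorph_sum mulr_suml; apply: eq_bigr => i _; rewrite mulr_sumr.
    apply: eq_bigr => j _.
    by rewrite rmorphM /= (conj_Creal (realn _ _)); ring.
  rewrite (eq_bigr _ (fun c _ => zz c)).
  rewrite [RHS]exchange_big; apply: eq_bigr => i _ /=.
  rewrite [RHS]exchange_big; apply: eq_bigr => j _ /=.
  rewrite -mulr_suml; congr (_ * _).
  rewrite (bigD1 (Ordinal (pN i))) //= big1 ?addr0; last first.
    move=> c /eqP ci; case: (boolP (p i == c)) => [/eqP pic|]; last by rewrite andbF mul0r.
    by exfalso; apply: ci; apply: val_inj; rewrite /= pic.
  rewrite eqxx andbT.
  rewrite [p j == _]eq_sym; by case: (i \in S); case: (j \in S); case: (p i == p j); rewrite /= ?mulr1 ?mul0r ?mulr0 ?mul1r.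
by apply: sumr_ge0 => c _; exact: mul_conjC_ge0.
Qed.

Section Graph.
Variables (R : realType) (n : nat) (e : rel 'I_n).
Hypothesis e_sym : forall x y, e x y = e y x.
Hypothesis no_iso : forall i, exists j, e i j.

Local Notation A := (adjmx R e).

Lemma Asym : A^T = A.
Proof. by apply/matrixP => i j; rewrite !mxE e_sym. Qed.

Lemma Aent x y : A x y = if e x y then 1 else 0.
Proof. by rewrite mxE. Qed.

Let fC : {rmorphism R -> R[i]} := real_complex R.
Lemma fr x : fC x \is Num.real.
Proof. by apply/complex_realP; exists x. Qed.
Lemma fp x : (0 < fC x) = (0 < x).
Proof. by rewrite -ltcR /fC rmorph0. Qed.
Lemma fs z : z \is Num.real -> exists x, z = fC x.
Proof. by case/complex_realP => x ->; exists x. Qed.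

Definition structure := exists V1 V2 : {set 'I_n},
  [/\ [disjoint V1 & V2], V1 :|: V2 = setT,
      complete_multipartite_on e V1 &
      forall v, v \in V2 -> e v v /\ forall u : 'I_n, e v u].

Lemma cm_of_equiv (V1 : {set 'I_n}) :
  (forall x, x \in V1 -> ~~ e x x) ->
  (forall x y z, x \in V1 -> y \in V1 -> z \in V1 ->
     ~~ e x y -> ~~ e y z -> ~~ e x z) ->
  complete_multipartite_on e V1.
Proof.
move=> irr tr.
pose r x := fun y : 'I_n => (y \in V1) && ~~ e x y.
exists (fun x => find (r x) (enum 'I_n)) => x y xV yV.
have hh a : a \in V1 -> has (r a) (enum 'I_n).
  by move=> aV; apply/hasP; exists a; rewrite ?mem_enum // /r aV irr.
case exy: (e x y).
  apply/esym/negP => /eqP eq.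
  have := nth_find x (hh x xV); have := nth_find x (hh y yV).
  rewrite -eq /r; set z := nth _ _ _ => /andP[zV nyz] /andP[_ nxz].
  have := tr x z y xV zV yV nxz; rewrite e_sym nyz => /(_ isT).
  by rewrite exy.
apply/esym/negPn/eqP; apply: eq_find => z; rewrite /r.
case zV: (z \in V1) => //=; congr negb.
apply/idP/idP => H; apply/negPn/negP => H'.
  by have := tr x y z xV yV zV; rewrite exy H' => /(_ isT isT); rewrite H.
by have := tr y x z yV xV zV; rewrite e_sym exy H' => /(_ isT isT); rewrite H.
Qed.

Lemma AF_struct : antiferromagnetic R e -> structure.
Proof.
move=> AF.
have NP := NoPD fr fp fs Asym AF.
pose V2 := [set v | [forall u, e v u]].
have irr : forall x, x \in ~: V2 -> ~~ e x x.
  move=> x; rewrite in_setC inE negb_forall => /existsP [u nxu].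
  apply/negP => exx.
  case euu: (e u u).
    apply: (NP (dl R x) (dl R u)); rewrite !Bf_dl !Aent ?exx ?euu ?(negbTE nxu) /=; lra.
  have [w euw] := no_iso u.
  have ewu : e w u by rewrite e_sym.
  apply: (NP (dl R x) (vadd (dl R u) (dl R w)));
    rewrite !(Bf_addl, Bf_addr, Bf_dl) !Aent ?exx ?euu ?(negbTE nxu) ?euw ?ewu /=.
    lra.
  by case: (e x w); case: (e w w); lra.
have tr : forall x y z, x \in ~: V2 -> y \in ~: V2 -> z \in ~: V2 ->
     ~~ e x y -> ~~ e y z -> ~~ e x z.
  move=> x y z xV yV zV nxy nyz; apply/negP => exz.
  have [w eyw] := no_iso y.
  have ewy : e w y by rewrite e_sym.
  have ezx : e z x by rewrite e_sym.
  have nyx : ~~ e y x by rewrite e_sym.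
  have nzy : ~~ e z y by rewrite e_sym.
  apply: (NP (vadd (dl R x) (dl R z)) (vadd (vsc 2 (dl R y)) (dl R w)));
    rewrite !(Bf_addl, Bf_addr, Bf_scl, Bf_scr, Bf_dl) !Aent
      ?(negbTE (irr x xV)) ?(negbTE (irr y yV)) ?(negbTE (irr z zV))
      ?exz ?ezx ?(negbTE nxy) ?(negbTE nyx) ?(negbTE nyz) ?(negbTE nzy) ?eyw ?ewy
      ?(e_sym w x) ?(e_sym w z) /=.
    lra.
  by case: (e x w); case: (e z w); case: (e w w); lra.
exists (~: V2), V2; split.
- by rewrite disjoints_subset subxx.
- by rewrite setUC setUCr.
- exact: cm_of_equiv.
- by move=> v; rewrite inE => /forallP H; split.
Qed.

Lemma struct_AF : structure -> antiferromagnetic R e.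
Proof.
case=> V1 [V2 [dj un [part hp] hV2]].
have inV2 i : i \notin V1 -> i \in V2.
  move=> iV1; have : i \in V1 :|: V2 by rewrite un inE.
  by rewrite inE (negbTE iV1).
have Aval i j : fC (A i j) =
    1 - ((i \in V1) && (j \in V1) && (part i == part j))%:R.
  rewrite Aent; case: (boolP (i \in V1)) => iV1; case: (boolP (j \in V1)) => jV1 /=.
  - rewrite hp //; case: (part i == part j); rewrite /= ?rmorph1 ?rmorph0.
      by rewrite subrr.
    by rewrite subr0.
  - have [_ H] := hV2 j (inV2 j jV1); rewrite e_sym H rmorph1.
    by rewrite subr0.
  - have [_ H] := hV2 i (inV2 i iV1); rewrite H rmorph1.
    by rewrite subr0.
  - have [_ H] := hV2 i (inV2 i iV1); rewrite H rmorph1.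
    by rewrite subr0.
rewrite /antiferromagnetic; apply: (AF_of_form fr fp Asym) => w sw.
rewrite /Hf.
have -> : \sum_i \sum_j w 0 i * (map_mx fC A) i j * (w 0 j)^* =
   (\sum_i w 0 i) * (\sum_j w 0 j)^* -
   \sum_i \sum_j ((i \in V1) && (j \in V1) && (part i == part j))%:R *
       (w 0 i * (w 0 j)^*).
  rewrite rmorph_sum mulr_suml -sumrB; apply: eq_bigr => i _.
  rewrite mulr_sumr -sumrB; apply: eq_bigr => j _.
  by rewrite mxE Aval; ring.
rewrite sw mul0r sub0r oppr_le0.
exact: (equiv_sum_ge0 V1 part (fun i => w 0 i)).
Qed.

End Graph.

Lemma U2E n (i j q : 'I_n) : (U_(i) + U_(j))%MM q = ((i == q) + (j == q))%N.
Proof. by rewrite mnmDE !mnm1E. Qed.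

Lemma U2_eq n (i j a b : 'I_n) :
  ((U_(i) + U_(j))%MM == (U_(a) + U_(b))%MM) =
  ((i == a) && (j == b)) || ((i == b) && (j == a)).
Proof.
apply/eqP/idP.
  move=> E.
  have Ei := congr1 (fun m : 'X_{1..n} => m i) E; rewrite /= !U2E eqxx in Ei.
  case: (eqVneq a i) => [ai|ai].
    subst a; move/addmI: E => /(congr1 (fun m : 'X_{1..n} => m j)).
    by rewrite !mnm1E eqxx; case: (eqVneq b j) => [->|] //; rewrite eqxx.
  case: (eqVneq b i) => [bi|bi]; last first.
    by move: Ei; rewrite (negbTE ai) (negbTE bi).
  subst b; rewrite [RHS]addmC in E; move/addmI: E => /(congr1 (fun m : 'X_{1..n} => m j)).
  rewrite !mnm1E eqxx; case: (eqVneq a j) => //= aj _; by rewrite aj eqxx orbT.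
by case/orP => /andP[/eqP -> /eqP ->] //; rewrite addmC.
Qed.

Section QGSection.
Variables (R : realType) (n : nat) (e : rel 'I_n).
Hypothesis e_sym : forall x y, e x y = e y x.
Local Notation A := (adjmx R e).
Local Notation Q := (QG R e).

Lemma QG_coef m : Q@_m = \sum_i \sum_j (A i j / 2%:R) * ((U_(i) + U_(j))%MM == m)%:R.
Proof.
rewrite /QG raddf_sum; apply: eq_bigr => i _; rewrite raddf_sum.
by apply: eq_bigr => j _; rewrite /= mcoeffZ -mpolyXD mcoeffX.
Qed.

Lemma delta2 (F : 'I_n -> 'I_n -> R) a b :
  \sum_i \sum_j F i j * ((i == a) && (j == b))%:R = F a b.
Proof.
rewrite (bigD1 a) //= [X in _ + X]big1 ?addr0; last first.
  by move=> i ia; apply: big1 => j _; rewrite (negbTE ia) mulr0.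
rewrite (bigD1 b) //= big1 ?addr0; last first.
  by move=> j jb; rewrite (negbTE jb) andbF mulr0.
by rewrite !eqxx mulr1.
Qed.

Lemma QG_coefU a b : Q@_(U_(a) + U_(b)) = if a == b then A a a / 2%:R else A a b.
Proof.
rewrite QG_coef.
under eq_bigr do under eq_bigr do rewrite U2_eq.
case: (eqVneq a b) => [<-|ab].
  under eq_bigr do under eq_bigr do rewrite orbb.
  by rewrite (delta2 (fun i j => A i j / 2%:R)).
transitivity (\sum_i \sum_j (A i j / 2%:R * ((i == a) && (j == b))%:R +
                               A i j / 2%:R * ((i == b) && (j == a))%:R)).
  apply: eq_bigr => i _; apply: eq_bigr => j _; rewrite -mulrDr; congr (_ * _).
  case: (eqVneq i a) => [->|ia] /=; last by rewrite add0r.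
  by rewrite (negbTE ab) /= orbF mulr0n addr0.
under eq_bigr do rewrite big_split.
rewrite big_split /= (delta2 (fun i j => A i j / 2%:R)) (delta2 (fun i j => A i j / 2%:R)).
by rewrite !mxE e_sym; case: (e b a); lra.
Qed.

Lemma QG_supp m : supp Q m =
  [exists i, exists j, e i j && ((U_(i) + U_(j))%MM == m)].
Proof.
rewrite /supp; apply/idP/idP.
  apply: contraTT; rewrite negb_exists => /forallP H.
  rewrite QG_coef big1 ?eqxx // => i _; apply: big1 => j _.
  have := H i; rewrite negb_exists => /forallP /(_ j); rewrite negb_and mxE.
  by case/orP => [/negbTE -> | /negbTE ->]; rewrite ?mul0r ?mulr0.
move/existsP => [i /existsP [j /andP [eij /eqP <-]]].
rewrite QG_coefU; case: (eqVneq i j) => [ij|_].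
  by subst j; rewrite mxE eij mul1r invr_eq0 pnatr_eq0.
by rewrite mxE eij oner_eq0.
Qed.

Lemma QG_nonneg : nonneg_coeffs Q.
Proof.
move=> m; rewrite QG_coef; apply: sumr_ge0 => i _; apply: sumr_ge0 => j _.
apply: mulr_ge0; last exact: ler0n.
by rewrite mxE; apply: divr_ge0; case: (e i j) => //; exact: ler0n.
Qed.

Lemma QG_homog : Q \is 2.-homog.
Proof.
apply/dhomogP => m; rewrite mcoeff_msupp => H.
have : supp Q m by [].
rewrite QG_supp => /existsP [i /existsP [j /andP [_ /eqP <-]]].
have := mdegD (U_(i))%MM (U_(j))%MM; rewrite !mdeg1; exact.
Qed.

Lemma QG_hessian : hessian Q = A.
Proof.
apply/matrixP => i j; rewrite mxE !mcoeff_mderiv add0m.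
rewrite mnm0E /= mnm1E QG_coefU.
case: (eqVneq i j) => [<-|ij] /=; last by rewrite mulr1n.
by rewrite mulr1n mxE; case: (e i i); lra.
Qed.

End QGSection.

Lemma neqF (T : eqType) (x y : T) : x != y -> (y == x) = false.
Proof. by rewrite eq_sym => /negbTE. Qed.

Section MC.
Variables (R : realType) (n : nat) (e : rel 'I_n).
Hypothesis e_sym : forall x y, e x y = e y x.
Hypothesis no_iso : forall i, exists j, e i j.
Local Notation Q := (QG R e).

Lemma Ssupp i j : e i j -> supp Q (U_(i) + U_(j))%MM.
Proof. by move=> eij; rewrite QG_supp //; apply/existsP; exists i; apply/existsP; exists j; rewrite eij eqxx. Qed.

Lemma Ssupp_inv m : supp Q m -> exists i j, e i j /\ m = (U_(i) + U_(j))%MM.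
Proof.
by rewrite QG_supp // => /existsP [i /existsP [j /andP [eij /eqP <-]]]; exists i, j.
Qed.

Lemma struct_of_irr_tr :
  (forall x, x \in ~: [set v | [forall u, e v u]] -> ~~ e x x) ->
  (forall x y z, x \in ~: [set v | [forall u, e v u]] ->
     y \in ~: [set v | [forall u, e v u]] -> z \in ~: [set v | [forall u, e v u]] ->
     ~~ e x y -> ~~ e y z -> ~~ e x z) ->
  structure e.
Proof.
move=> irr tr; exists (~: [set v | [forall u, e v u]]), [set v | [forall u, e v u]]; split.
- by rewrite disjoints_subset subxx.
- by rewrite setUC setUCr.
- exact: cm_of_equiv.
- by move=> v; rewrite inE => /forallP H; split.
Qed.

Lemma G_lemma : Mconvex (supp Q) -> forall s w k l,
  e s w -> e k l -> w != k -> w != l -> e s k || e s l.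
Proof.
move=> MC s w k l esw ekl wk wl.
have hlt : ((U_(k) + U_(l))%MM w < (U_(s) + U_(w))%MM w)%N.
  by rewrite !U2E eqxx (neqF wk) (neqF wl) addn1.
have [q [aq Sq]] := MC _ _ (Ssupp esw) (Ssupp ekl) w hlt.
rewrite addmK in Sq.
have [i' [j' [eij E]]] := Ssupp_inv Sq.
have esq : e s q.
  move/eqP: E; rewrite U2_eq => /orP [/andP[/eqP si /eqP qj] | /andP[/eqP si /eqP qi]].
    by rewrite si qj.
  by rewrite si qi e_sym.
move: aq; rewrite !U2E.
case: (eqVneq k q) => [kq|_]; first by rewrite kq esq.
case: (eqVneq l q) => [lq|_]; first by rewrite lq esq orbT.
by rewrite ltn0.
Qed.

Lemma Mconvex_struct : Mconvex (supp Q) -> structure e.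
Proof.
move=> MC; apply: struct_of_irr_tr.
  move=> x; rewrite in_setC inE negb_forall => /existsP [u nxu].
  apply/negP => exx.
  have [w euw] := no_iso u.
  have wx : w != x by apply/eqP => wx; subst w; rewrite e_sym euw in nxu.
  have := G_lemma MC euw exx wx wx.
  by rewrite orbb e_sym (negbTE nxu).
move=> x y z _ _ _ nxy nyz; apply/negP => exz.
have [w eyw] := no_iso y.
have wx : w != x by apply/eqP => wx; subst w; rewrite e_sym eyw in nxy.
have wz : w != z by apply/eqP => wz; subst w; rewrite eyw in nyz.
have := G_lemma MC eyw exz wx wz.
by rewrite e_sym (negbTE nxy) (negbTE nyz).
Qed.

Lemma core i j k l : e i j -> e k l ->
  ((U_(k) + U_(l))%MM i < (U_(i) + U_(j))%MM i)%N ->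
  structure e ->
  exists q, ((U_(i) + U_(j))%MM q < (U_(k) + U_(l))%MM q)%N /\ e j q.
Proof.
move=> eij ekl + [V1 [V2 [dj un [part hp] hV2]]].
have inV2 x : x \notin V1 -> x \in V2.
  move=> xV1; have : x \in V1 :|: V2 by rewrite un inE.
  by rewrite inE (negbTE xV1).
have loop x : e x x -> forall u, e x u.
  move=> exx; case: (boolP (x \in V1)) => xV1.
    by rewrite hp // eqxx in exx.
  by have [] := hV2 x (inV2 x xV1).
have nadj x y : ~~ e x y -> [/\ x \in V1, y \in V1 & part x = part y].
  move=> nxy.
  have xV1 : x \in V1.
    apply/negPn/negP => xV1; have [_ H] := hV2 x (inV2 x xV1); by rewrite H in nxy.
  have yV1 : y \in V1.
    apply/negPn/negP => yV1; have [_ H] := hV2 y (inV2 y yV1); by rewrite e_sym H in nxy.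
  by split => //; move: nxy; rewrite hp // negbK => /eqP.
rewrite !U2E eqxx.
case: (eqVneq j i) => [ji | ji].
  subst j; have all_i := loop i eij.
  case: (eqVneq k i) => [ki|ki].
    subst k; case: (eqVneq l i) => [li|li]; first by subst l.
    move=> _; exists l; rewrite !U2E eqxx (neqF li) all_i; split => //.
  move=> _; exists k; rewrite !U2E eqxx (neqF ki) all_i; split => //.
rewrite addn0; case: (eqVneq k i) => //= ki; case: (eqVneq l i) => //= li _.
case: (eqVneq k l) => [kl|kl].
  subst l; exists k; rewrite !U2E eqxx (neqF ki) e_sym (loop k ekl); split => //.
  by case: (j == k).
case: (eqVneq j k) => [jk|jk].
  subst k; exists l; rewrite !U2E eqxx (neqF li) (negbTE kl); split => //.
case: (eqVneq j l) => [jl|jl].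
  subst l; exists k; rewrite !U2E eqxx (neqF ki) (negbTE jk) e_sym; split => //.
case: (boolP (e j k)) => ejk.
  by exists k; rewrite !U2E eqxx (neqF ki) (negbTE jk) (neqF kl).
case: (boolP (e j l)) => ejl.
  by exists l; rewrite !U2E eqxx (neqF li) (negbTE jl) (negbTE kl).
have [_ kV1 pjk] := nadj _ _ ejk; have [_ lV1 pjl] := nadj _ _ ejl.
by move: ekl; rewrite hp // -pjk -pjl eqxx.
Qed.

Lemma struct_Mconvex : structure e -> Mconvex (supp Q).
Proof.
move=> st a b Sa Sb p bpa.
have [i [j [eij Ea]]] := Ssupp_inv Sa; have [k [l [ekl Eb]]] := Ssupp_inv Sb.
subst a b.
have : (i == p) || (j == p).
  move: bpa; rewrite !U2E; case: (i == p); case: (j == p) => //.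
case/orP => /eqP ip; subst p.
  have [q [aq ejq]] := core eij ekl bpa st.
  exists q; split => //; rewrite [(U_(i) + U_(j))%MM]addmC addmK; exact: Ssupp.
rewrite [(U_(i) + U_(j))%MM]addmC in bpa *.
have eji : e j i by rewrite e_sym.
have [q [aq eiq]] := core eji ekl bpa st.
by exists q; split => //; rewrite [(U_(j) + U_(i))%MM]addmC addmK; exact: Ssupp.
Qed.
End MC.

Local Close Scope sesquilinear_scope.

Theorem theorem3p2 (R : realType) (n : nat) (e : rel 'I_n)
    (e_sym : forall x y : 'I_n, e x y = e y x)
    (no_isolated : forall i : 'I_n, exists j : 'I_n, e i j) :
  [<-> antiferromagnetic R e;
       lorentzian 2 (QG R e);
       Mconvex (supp (QG R e));
       exists V1 V2 : {set 'I_n},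
         [/\ [disjoint V1 & V2], V1 :|: V2 = setT,
             complete_multipartite_on e V1 &
             forall v, v \in V2 -> e v v /\ forall u : 'I_n, e v u]].
Proof.
have L2 : lorentzian 2 (QG R e) <-> antiferromagnetic R e.
  rewrite /= /antiferromagnetic; split.
    by case=> _ _; rewrite QG_hessian.
  move=> AF; split; [exact: QG_nonneg | exact: QG_homog | by rewrite QG_hessian].
tfae.
- by move=> AF; apply/L2.
- by move=> /L2 /(AF_struct e_sym no_isolated) /(struct_Mconvex e_sym).
- exact: (Mconvex_struct e_sym no_isolated).
- exact: (struct_AF e_sym).
Qed.
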